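(* For every integer $k\ge2$, $\inf_{x\in\Delta^{d-1}}F^k(x)=12\cdot3^{k-1}-3$, and this value is attained at the barycenter $x=(1/d,\dots,1/d)$.
   Context: Fix $k\ge2$ and $d=4\cdot3^{k-1}$. $\Delta^{d-1}=\{x\in\mathbb{R}^d: x_i>0,\ \sum_i x_i=1\}$. For $j=1,2,3,4$, $I_j=\{(j-1)3^{k-1}+1,\dots,j\cdot3^{k-1}\}$ and $\Sigma_j(x)=\sum_{l\in I_j}x_l$. Let $\sigma(t)=(1-t)/t$. For $i\in\{1,\dots,d\}$ let $j(i)=1,4,3,2$ according as $i\equiv0,1,2,3\pmod4$, $f_i(x)=\sigma(\Sigma_{j(i)}(x))\sigma(x_i)$, and $F^k(x)=\max_{1\le i\le d}f_i(x)$. *)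

(* Defs.v *)
From HB Require Import structures.
From mathcomp Require Import all_boot all_order all_algebra.
Unset Printing Implicit Defensive.
Import Order.TTheory GRing.Theory Num.Theory.
Local Open Scope ring_scope.

Definition dimd (k : nat) : nat := (4 * 3 ^ (k - 1))%N.

Lemma dimd_gt0 k : (0 < dimd k)%N.
Proof. by rewrite /dimd muln_gt0 expn_gt0. Qed.

Definition in_simplex (R : realFieldType) (n : nat) (x : 'I_n -> R) : Prop :=
  (forall i, 0 < x i) /\ \sum_(i < n) x i = 1.

(* Paper index l (1-based) = l0 + 1 with l0 : 'I_d.
   l in I_j  <=>  (j-1) 3^(k-1) + 1 <= l <= j 3^(k-1)  <=>  l0 %/ 3^(k-1) = j-1. *)
Definition Sigma (R : realFieldType) (k : nat) (j : nat) (x : 'I_(dimd k) -> R) : R :=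
  \sum_(l < dimd k | (l %/ 3 ^ (k - 1) == j.-1)%N) x l.

Definition sigma (R : realFieldType) (t : R) : R := (1 - t) / t.

Definition jmap (i : nat) : nat :=
  match (i %% 4)%N with
  | 0 => 1%N | 1 => 4%N | 2 => 3%N | _ => 2%N
  end.

(* f_i for 0-based i0 (paper index i = i0 + 1). *)
Definition fk (R : realFieldType) (k : nat) (i : 'I_(dimd k)) (x : 'I_(dimd k) -> R) : R :=
  sigma R (Sigma R k (jmap i.+1) x) * sigma R (x i).

Definition Fk (R : realFieldType) (k : nat) (x : 'I_(dimd k) -> R) : R :=
  \big[Num.max/fk R k (Ordinal (dimd_gt0 k)) x]_(i < dimd k) fk R k i x.

Definition barycenter (R : realFieldType) (k : nat) : 'I_(dimd k) -> R :=
  fun _ => (dimd k)%:R^-1.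

(* Main.v *)
Require Import Defs.
From HB Require Import structures.
From mathcomp Require Import all_boot all_order all_algebra.
From mathcomp Require Import ring lra zify.
Import Order.TTheory GRing.Theory Num.Theory.
Local Open Scope ring_scope.

Lemma jmap_shift n m : jmap (n + 4 * m) = jmap n.
Proof. by rewrite /jmap addnC mulnC modnMDl. Qed.

Lemma jmap_lt n : ((jmap n).-1 < 4)%N.
Proof. by rewrite /jmap; case: (n %% 4)%N => [|[|[|n']]]. Qed.

Section S.
Variable R : realFieldType.

Lemma count_res m (F : nat -> R) :
  \sum_(i < 4 * m) F (jmap i.+1) = (F 1%N + F 2%N + F 3%N + F 4%N) *+ m.
Proof.
rewrite -(big_mkord xpredT (fun i => F (jmap i.+1))).
elim: m => [|m IH]; first by rewrite big_geq.
have -> : (4 * m.+1 = (4 * m).+4)%N by lia.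
rewrite !big_nat_recr // IH.
have J r : jmap (4 * m + r) = jmap r by rewrite addnC jmap_shift.
have J1 : jmap (4 * m).+1 = jmap 1 by rewrite -(J 1) addn1.
have J2 : jmap (4 * m).+2 = jmap 2 by rewrite -(J 2) addn2.
have J3 : jmap (4 * m).+3 = jmap 3 by rewrite -(J 3) addn3.
have J4 : jmap (4 * m).+4 = jmap 4 by rewrite -(J 4) addn4.
rewrite J1 J2 J3 J4 /jmap /= mulrS addrC.
set t := (_ *+ m); ring.
Qed.

Lemma divq m l q : (0<m)%N -> (q * m <= l < q * m+m)%N -> (l %/ m)%N = q.
Proof.
move=> m0 /andP[h1 h2]; apply/eqP; rewrite eqn_leq leq_divRL // h1 andbT.
rewrite -ltnS ltn_divLR // mulSn; lia.
Qed.

Lemma count_blk m q (c:R): (0<m)%N -> (q<4)%N ->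
  \sum_(l < 4 * m | (l %/ m == q)%N) c = c *+ m.
Proof.
move=> m0 q4.
rewrite -(big_mkord (fun l => (l %/ m == q)%N) (fun _ => c)).
have h1 : (0 <= q * m)%N by [].
have h2 : (q * m <= q * m+m)%N by rewrite leq_addr.
have h3 : (q * m+m <= 4 * m)%N by nia.
rewrite (big_cat_nat h1 (leq_trans h2 h3)) (big_cat_nat h2 h3) /=.
rewrite [X in X + _]big_nat_cond [X in X + _]big1; last first.
  move=> i /andP[/andP[_ hi] hq].
  have : (i %/ m < q)%N by rewrite ltn_divLR.
  by rewrite (eqP hq) ltnn.
rewrite add0r [X in _ + X]big_nat_cond [X in _ + X]big1; last first.
  move=> i /andP[/andP[hi _] hq].
  have : (q.+1 <= i %/ m)%N by rewrite leq_divRL // mulSn; lia.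
  by rewrite (eqP hq) ltnn.
rewrite addr0 big_nat_cond (eq_bigl (fun i => (q * m <= i < q * m+m)%N)).
  by rewrite -big_nat sumr_const_nat addKn.
move=> i; case h: (q * m <= i < q * m + m)%N => //=.
by rewrite (divq _ _ _ m0 h) eqxx.
Qed.

Lemma blocks_sum m (x : 'I_(4 * m) -> R) : (0 < m)%N ->
  \sum_(l < 4 * m | (l %/ m == 0)%N) x l + \sum_(l < 4 * m | (l %/ m == 1)%N) x l
  + \sum_(l < 4 * m | (l %/ m == 2)%N) x l + \sum_(l < 4 * m | (l %/ m == 3)%N) x l
  = \sum_(l < 4 * m) x l.
Proof.
move=> m0; rewrite !(big_mkcond (fun l : 'I_(4 * m) => (l %/ m == _)%N)) -!big_split /=.
apply: eq_bigr => l _.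
have : (l %/ m < 4)%N by rewrite ltn_divLR // mulnC.
case: (l %/ m)%N => [|[|[|[|n]]]] //= _; by rewrite ?addr0 ?add0r.
Qed.

Lemma blk_pos m (x : 'I_(4 * m) -> R) q : (0 < m)%N -> (q < 4)%N ->
  (forall i, 0 < x i) -> 0 < \sum_(l < 4 * m | (l %/ m == q)%N) x l.
Proof.
move=> m0 q4 xp.
have hq : (q * m < 4 * m)%N by rewrite ltn_pmul2r.
rewrite (bigD1 (Ordinal hq)) /=; last by rewrite mulnK.
apply: (lt_le_trans (xp (Ordinal hq))); rewrite lerDl sumr_ge0 // => i _; exact: ltW.
Qed.

Lemma step (a y M : R) : 0 < a -> 0 < y -> sigma R a * sigma R y < M ->
  1 - a < y * (1 + (M - 1) * a).
Proof.
move=> a0 y0; rewrite /sigma mulf_div ltr_pdivrMr ?mulr_gt0 // => h; nra.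
Qed.

Lemma tang (a mm : R) : 1 <= mm -> 0 <= a ->
  ((4 * mm)^-1 - (12 * mm - 3) / (9 * mm ^+ 2) * (a - 4^-1)) * (1 + (12 * mm - 3 - 1) * a)
  <= 1 - a.
Proof.
move=> m1 a0; have mm0 : mm != 0 by apply: lt0r_neq0; lra.
rewrite -subr_ge0.
have -> : 1 - a - ((4 * mm)^-1 - (12 * mm - 3) / (9 * mm ^+ 2) * (a - 4^-1)) * (1 + (12 * mm - 3 - 1) * a)
  = (12 * mm - 3) / (9 * mm ^+ 2) * (12 * mm - 4) * (a - 4^-1) ^+ 2.
  by field.
apply: mulr_ge0; last exact: sqr_ge0.
apply: mulr_ge0; last lra.
apply: divr_ge0; [lra | apply: mulr_ge0; [lra | exact: sqr_ge0]].
Qed.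
End S.
Arguments count_res {R}.
Arguments count_blk {R}.
Arguments blocks_sum {R}.
Arguments blk_pos {R}.
Arguments step {R}.
Arguments tang {R}.

Theorem mainTheorem11 (R : realFieldType) (k : nat) (hk : (2 <= k)%N) :
  (forall x : 'I_(dimd k) -> R, in_simplex R (dimd k) x ->
      12 * 3 ^+ (k - 1) - 3 <= Fk R k x)
  /\ in_simplex R (dimd k) (barycenter R k)
  /\ Fk R k (barycenter R k) = 12 * 3 ^+ (k - 1) - 3.
Proof.
have m0 : (0 < 3 ^ (k-1))%N by rewrite expn_gt0.
have Sig : forall (x : 'I_(dimd k) -> R) j,
  Sigma R k j x = \sum_(l < 4 * 3 ^ (k-1) | (l %/ 3 ^ (k-1) == j.-1)%N) x l by [].
set m := (3 ^ (k-1))%N in m0 Sig *.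
have mR : 3 ^+ (k-1) = m%:R :> R by rewrite natrX.
rewrite mR.
have m1 : 1 <= m%:R :> R by rewrite ler1n.
set M := 12 * m%:R - 3.
split.
  move=> x [xpos xsum].
  rewrite leNgt; apply/negP => hlt.
  have hf : forall i, fk R k i x < M.
    by move=> i; apply: le_lt_trans hlt; apply: le_bigmax.
  set a := fun j => Sigma R k j x.
  have apos i : 0 < a (jmap i.+1).
    by rewrite /a Sig; apply: blk_pos => //; exact: jmap_lt.
  have asum : a 1%N + a 2%N + a 3%N + a 4%N = 1 by rewrite /a !Sig /= blocks_sum.
  pose c : R := (12 * m%:R - 3) / (9 * m%:R ^+ 2).
  pose L := fun t : R => (4 * m%:R)^-1 - c * (t - 4^-1).
  have key (i : 'I_(dimd k)) : L (a (jmap i.+1)) < x i.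
    have h1 := step _ _ _ (apos i) (xpos i) (hf i).
    have h2 := tang _ _ m1 (ltW (apos i)).
    have hp : 0 < 1 + (M - 1) * a (jmap i.+1).
      apply: ltr_pwDl => //; apply: mulr_ge0; [rewrite /M; lra | exact: ltW].
    rewrite -(ltr_pM2r hp); exact: le_lt_trans h2 h1.
  have : \sum_(i < dimd k) L (a (jmap i.+1)) < \sum_i x i.
    apply: ltr_sum; last by move=> i _; exact: key.
    by apply/hasP; exists (Ordinal (dimd_gt0 k)); [exact: mem_index_enum|].
  rewrite xsum (count_res m (fun j => L (a j))).
  have -> : L (a 1%N) + L (a 2%N) + L (a 3%N) + L (a 4%N)
     = (m%:R)^-1 - c * (a 1%N + a 2%N + a 3%N + a 4%N - 1).
    by rewrite /L; field; rewrite pnatr_eq0 -lt0n.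
  rewrite asum subrr mulr0 subr0 -[_^-1 *+ m]mulr_natr.
  rewrite (@mulVf R) ?ltxx //.
  by rewrite pnatr_eq0 -lt0n.
split.
  split => [i|]; first by rewrite /barycenter invr_gt0 ltr0n dimd_gt0.
  by rewrite /barycenter sumr_const card_ord -[_^-1 *+ _]mulr_natr (@mulVf R) // pnatr_eq0 -lt0n dimd_gt0.
have hf i : fk R k i (barycenter R k) = M.
  rewrite /fk Sig /barycenter count_blk //; last exact: jmap_lt.
  rewrite /sigma /dimd -/m -mulr_natr natrM /M.
  field.
  by rewrite pnatr_eq0 -lt0n.
rewrite /Fk; apply/le_anti/andP; split.
  by apply: bigmax_le => [|i _]; rewrite hf.
by rewrite -(hf (Ordinal (dimd_gt0 k))) le_bigmax.
Qed.
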